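(* Let $\mathbf{M}$ be a real $n\times n$ non-negative matrix whose columns all sum to $\alpha$, written in lower block-triangular form with irreducible diagonal blocks $\mathbf{B}_0,\dots,\mathbf{B}_{t-1}$ and coordinate sets $S_0,\dots,S_{t-1}$. Let $s$ be the algebraic multiplicity of the eigenvalue $\rho(\mathbf{M})=\alpha$ and let $j_0,\dots,j_{s-1}$ be the indices of the diagonal blocks having eigenvalue $\alpha$. For each $r\in[s]$ let $\mathbf{l}_{j_r}$ be a left eigenvector of $\mathbf{M}$ for $\alpha$ which equals $1$ on every coordinate of $S_{j_r}$, vanishes on $S_{j_{r'}}$ for $r'\neq r$, and satisfies $\operatorname{supp}(\mathbf{l}_{j_r})\subseteq S_{j_r}\cup\bigcup_{i<j_r,\,i\rightsquigarrow j_r}S_i$. Then \[\sum_{r\in[s]}\mathbf{l}_{j_r}=\mathbf{1},\] the all-ones row vector.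
   Context: Lower block-triangular form: $\mathbf{M}$ has square irreducible non-negative diagonal blocks $\mathbf{B}_0,\dots,\mathbf{B}_{t-1}$ of sizes $n_0,\dots,n_{t-1}$, zero blocks above the diagonal, and non-negative blocks $*_{i,j}$ ($n_i\times n_j$) below the diagonal; $S_j=\{\sum_{i<j}n_i,\dots,\sum_{i\le j}n_i-1\}$. For $i<j$, $i\rightsquigarrow j$ means there is a sequence $i=i_0<i_1<\dots<i_m=j$ with $*_{i_{r+1},i_r}\neq\mathbf{0}$ for all $r$. $[s]=\{0,\dots,s-1\}$. *)

(* Defs.v *)
From HB Require Import structures.
From mathcomp Require Import all_boot all_order all_algebra.
From mathcomp Require Import reals.
Set Implicit Arguments. Unset Strict Implicit. Unset Printing Implicit Defensive.
Import Order.TTheory GRing.Theory Num.Theory.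
Local Open Scope ring_scope.

Section BlockDefs.
Variables (R : realType) (n t : nat).
Variable (M : 'M[R]_n) (nsz : 'I_t -> nat).

Definition offs (j : 'I_t) : nat := (\sum_(i < t | (i < j)%N) nsz i)%N.

Definition Sset (j : 'I_t) : {set 'I_n} :=
  [set k : 'I_n | (offs j <= k < offs j + nsz j)%N].

(* entries of M indexed by naturals (0 outside the range) *)
Definition Mnat (k l : nat) : R :=
  if (insub k : option 'I_n) is Some i then
    if (insub l : option 'I_n) is Some j then M i j else 0
  else 0.

Definition Bblk (j : 'I_t) : 'M[R]_(nsz j) :=
  \matrix_(a < nsz j, b < nsz j) Mnat (offs j + a) (offs j + b).

Definition blockNZ (a b : 'I_t) : bool :=
  [exists k in Sset a, exists l in Sset b, M k l != 0].

Definition leadsto (i j : 'I_t) : bool :=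
  (i < j)%N && connect [rel a b : 'I_t | (a < b)%N && blockNZ b a] i j.

End BlockDefs.

(* irreducible nonnegative square matrix: its digraph (edge a -> b iff
   A a b > 0) is strongly connected (1x1 matrices are irreducible) *)
Definition irreducible_mx (R : realType) (m : nat) (A : 'M[R]_m) : bool :=
  [forall a, forall b, connect [rel x y : 'I_m | 0 < A x y] a b].

(* Main.v *)
Require Import Defs.
From HB Require Import structures.
From mathcomp Require Import all_boot all_order all_algebra.
From mathcomp Require Import reals.
From mathcomp Require Import zify.
Import Order.TTheory GRing.Theory Num.Theory.
Local Open Scope ring_scope.

Set Implicit Arguments.
Section H.
Variables (t : nat) (nsz : 'I_t -> nat).
Definition fsum (m : nat) : nat := (\sum_(i < t | (i < m)%N) nsz i)%N.

Lemma fsumS (j : 'I_t) : fsum j.+1 = (fsum j + nsz j)%N.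
Proof.
rewrite /fsum (bigD1 j) //= addnC; congr (_ + _)%N.
apply: eq_bigl => i; rewrite ltnS ltn_neqAle andbC; congr (_ && _).
Qed.

Lemma fsum_mono m m' : (m <= m')%N -> (fsum m <= fsum m')%N.
Proof.
move=> H; rewrite /fsum [X in (_ <= X)%N]big_mkcond [X in (X <= _)%N]big_mkcond.
apply: leq_sum => i _; case: ifP => h; first by rewrite (leq_trans h H).
by [].
Qed.

Lemma fsum_t : fsum t = (\sum_(i < t) nsz i)%N.
Proof. by apply: eq_bigl => i; rewrite ltn_ord. Qed.

Lemma fsum_find k : forall m, (k < fsum m)%N -> (m <= t)%N ->
  exists j : 'I_t, (fsum j <= k < fsum j + nsz j)%N.
Proof.
elim=> [|m IH]. by rewrite /fsum big_pred0.
move=> Hk Hm.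
have mt : (m < t)%N by [].
case: (ltnP k (fsum m)) => H.
  by apply: IH => //; apply: ltnW.
exists (Ordinal mt) => /=; rewrite H /= -(fsumS (Ordinal mt)) //.
Qed.
End H.
Theorem mainTheorem3 (R : realType) (n t : nat) (M : 'M[R]_n) (alpha : R)
    (nsz : 'I_t -> nat)
    (* block structure: positive sizes summing to n *)
    (Hpos : forall i, (0 < nsz i)%N)
    (Hsum : n = (\sum_(i < t) nsz i)%N)
    (* M non-negative with all column sums equal to alpha *)
    (Hnneg : forall i j, 0 <= M i j)
    (Hcol : forall j, \sum_(i < n) M i j = alpha)
    (* lower block-triangular: zero blocks above the diagonal *)
    (Hlow : forall (a b : 'I_t) (k l : 'I_n), (a < b)%N ->
        k \in Sset n nsz a -> l \in Sset n nsz b -> M k l = 0)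
    (* irreducible diagonal blocks *)
    (Hirr : forall j, irreducible_mx (Bblk M nsz j))
    (* s = algebraic multiplicity of alpha *)
    (s : nat) (Hs : s = mup alpha (char_poly M))
    (* j_0 < ... < j_{s-1} : the diagonal blocks having eigenvalue alpha *)
    (jj : 'I_s -> 'I_t)
    (Hjinc : forall r r' : 'I_s, (r < r')%N -> (jj r < jj r')%N)
    (Hjeig : forall i : 'I_t, eigenvalue (Bblk M nsz i) alpha <-> exists r, jj r = i)
    (* the left eigenvectors l_{j_r} *)
    (l : 'I_s -> 'rV[R]_n)
    (Hleig : forall r, l r *m M = alpha *: l r)
    (Hone : forall r k, k \in Sset n nsz (jj r) -> l r 0 k = 1)
    (Hzero : forall r r' k, r' != r -> k \in Sset n nsz (jj r') -> l r 0 k = 0)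
    (Hsupp : forall r k, l r 0 k != 0 ->
        k \in Sset n nsz (jj r) \/
        exists i : 'I_t, leadsto M nsz i (jj r) /\ k \in Sset n nsz i) :
  \sum_(r < s) l r = const_mx 1.
Proof.
have offsE : forall j, offs nsz j = fsum nsz j by [].
have Hend : forall j : 'I_t, (offs nsz j + nsz j <= n)%N.
  move=> j; rewrite offsE -fsumS Hsum -fsum_t; exact: fsum_mono.
have Hcover : forall k : 'I_n, exists j, k \in Sset n nsz j.
  move=> k; have hk : (k < fsum nsz t)%N by rewrite fsum_t -Hsum.
  have [j Hj] := @fsum_find t nsz k t hk (leqnn t).
  by exists j; rewrite inE.
set v := \sum_(r < s) l r - const_mx 1.
have Hv : v *m M = alpha *: v.
  rewrite /v mulmxBl scalerBr mulmx_suml scaler_sumr.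
  congr (_ - _); first by apply: (big_ind2 (fun x y => x = y)) => // x1 x2 y1 y2 -> ->.
  apply/rowP => j; rewrite !mxE mulr1 -(Hcol j); apply: eq_bigr => i _.
  by rewrite !mxE mul1r.
have HC : forall r k, k \in Sset n nsz (jj r) -> v 0 k = 0.
  move=> r k Hk; rewrite /v !mxE summxE (bigD1 r) //= Hone // big1 ?addr0 ?subrr //.
  by move=> r' Hr'; apply: (Hzero r' r k) => //; rewrite eq_sym.
have Hstep : forall b : 'I_t, (forall a : 'I_t, (b < a)%N ->
    forall k, k \in Sset n nsz a -> v 0 k = 0) ->
    forall k, k \in Sset n nsz b -> v 0 k = 0.
  move=> b IH.
  have ko_lt : forall c : 'I_(nsz b), (offs nsz b + c < n)%N.
    by move=> c; apply: leq_trans (Hend b); rewrite ltn_add2l.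
  pose ko := fun c => Ordinal (ko_lt c).
  have koS : forall c, ko c \in Sset n nsz b.
    by move=> c; rewrite /Sset inE /= leq_addr ltn_add2l ltn_ord.
  have SE : Sset n nsz b = [set ko c | c in [set: 'I_(nsz b)]].
    apply/setP => k; apply/idP/imsetP.
      rewrite inE => /andP [h1 h2].
      have hc : (k - offs nsz b < nsz b)%N by rewrite ltn_subLR.
      exists (Ordinal hc); first by rewrite inE.
      by apply: val_inj => /=; rewrite subnKC.
    by move=> [c _ ->].
  have koinj : injective ko.
    by move=> c c' /(congr1 val) /= /addnI /val_inj.
  pose w := \row_(c < nsz b) v 0 (ko c).
  have Hw : w *m Bblk M nsz b = alpha *: w.
    apply/rowP => c; rewrite !mxE.
    have := congr1 (fun x : 'rV[R]_n => x 0 (ko c)) Hv => /=; rewrite !mxE => <-.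
    rewrite (bigID (fun k => k \in Sset n nsz b)) /= [X in _ + X]big1 ?addr0.
      rewrite SE big_imset /=; last by move=> x y _ _; apply: koinj.
      rewrite big_set /=; apply: eq_bigr => a _; rewrite !mxE /Mnat.
      by rewrite !(valK (ko a)) !(valK (ko c)) /=.
    move=> k Hk; have [a Ha] := Hcover k.
    case: (ltngtP a b) => hab.
    - by rewrite (Hlow a b k (ko c)) ?mulr0.
    - by rewrite (IH a hab k Ha) mul0r.
    - have eab : a = b by apply: val_inj.
      by move: Hk; rewrite -eab Ha.
  case: (eqVneq w 0) => [w0|wn0].
    move=> k; rewrite SE => /imsetP [c _ ->].
    by have := congr1 (fun x : 'rV[R]_(nsz b) => x 0 c) w0; rewrite !mxE.
  have : eigenvalue (Bblk M nsz b) alpha by apply/eigenvalueP; exists w.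
  move/Hjeig => [r <-]; exact: HC.
have Hall : forall m (b : 'I_t), (t - m <= b)%N ->
    forall k, k \in Sset n nsz b -> v 0 k = 0.
  elim=> [|m IHm] b hb.
    by move: hb; rewrite subn0 leqNgt ltn_ord.
  apply: Hstep => a hab; apply: IHm; lia.
have v0 : v = 0.
  apply/rowP => k; rewrite [RHS]mxE; have [b Hb] := Hcover k.
  by apply: (Hall t b _ k Hb); rewrite subnn.
by apply/eqP; rewrite -subr_eq0; apply/eqP.
Qed.
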